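(* Let $F=\langle f_1,\ldots,f_k\rangle$ be a normalized solution to an instance $(\mathcal{T}_{initial},\mathcal{T}_{final},k)$ of Flip Distance, and let $C$ be a component of $\mathcal{D}_F$. Let $f_i$ and $f_h$, with $i<h$, be two flips in $C$ such that $\epsilon(f_i)=\epsilon(f_h)$. Then there is a directed path from $f_i$ to $f_h$ in $C$.
   Context: A triangulation of a finite point set $\mathcal{P}$ in the plane is a partition of the convex hull of $\mathcal{P}$ into triangles whose vertex set is $\mathcal{P}$. For an interior edge $e$ of a triangulation $\mathcal{T}$, the quadrilateral associated with $e$ is the union of the two triangles of $\mathcal{T}$ sharing $e$. A flip $f$ with underlying edge $\epsilon(f)=e$ is admissible in $\mathcal{T}$ if $e\in\mathcal{T}$ and its associated quadrilateral is convex; performing it replaces $e$ by the other diagonal $\phi(f)$ of that quadrilateral. Two distinct edges share a triangle in $\mathcal{T}$ if they are edges of the same triangle of $\mathcal{T}$. A sequence $F=\langle f_1,\ldots,f_r\rangle$ is valid with respect to $\mathcal{T}$ if there are triangulations $\mathcal{T}_0=\mathcal{T},\mathcal{T}_1,\ldots,\mathcal{T}_r$ such that $f_i$ is admissible in $\mathcal{T}_{i-1}$ and performing it yields $\mathcal{T}_i$; then we write $\mathcal{T}\xrightarrow{F}\mathcal{T}_r$. Flips in a sequence are distinct objects even if they have the same underlying edge. For $1\le i<j\le r$, flip $f_j$ is adjacent to $f_i$ (written $f_i\to f_j$) if (1) either $\phi(f_i)=\epsilon(f_j)$ or $\phi(f_i)$ and $\epsilon(f_j)$ share a triangle in $\mathcal{T}_{j-1}$,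 and (2) there is no $p$ with $i<p<j$ and $\epsilon(f_p)=\phi(f_i)$. $\mathcal{D}_F$ is the directed acyclic graph whose nodes are the flips of $F$ and whose arcs are the pairs $f_i\to f_j$; a component of it is a weakly connected component. The flip distance between two triangulations is the minimum length of a valid sequence transforming one into the other. An instance $(\mathcal{T}_{initial},\mathcal{T}_{final},k)$ of Flip Distance consists of two triangulations of $\mathcal{P}$ and $k\in\mathbb{N}$; a solution is a valid sequence $F$ of length $k$ with $\mathcal{T}_{initial}\xrightarrow{F}\mathcal{T}_{final}$, where $k$ is the flip distance between them. For a solution $F=\langle f_1,\ldots,f_k\rangle$, $\mathcal{T}_j$ denotes the outcome of applying $\langle f_1,\ldots,f_j\rangle$ to $\mathcal{T}_{initial}$. A changed edge is an edge of $\mathcal{T}_{initial}$ not in $\mathcal{T}_{final}$; a component of $\mathcal{D}_F$ is essential if it contains a flip whose underlying edge is a changed edge. A solution $F$ is normalized if every component of $\mathcal{D}_F$ is essential and the flips of each component of $\mathcal{D}_F$ appear as a consecutive block in $F$. *)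

(* Defs.v *)
(* Points of the plane have coordinates in an arbitrary
   real field R; the point set P is given as an injective map p : 'I_n -> R*R. *)
From mathcomp Require Import all_boot all_order all_algebra.
Set Implicit Arguments. Unset Strict Implicit. Unset Printing Implicit Defensive.
Import Order.TTheory GRing.Theory Num.Theory.
Local Open Scope ring_scope.

Section FlipDefs.
Variables (R : realFieldType) (n : nat) (p : 'I_n -> R * R).

Definition orient (a b c : R * R) : R :=
  (b.1 - a.1) * (c.2 - a.2) - (b.2 - a.2) * (c.1 - a.1).

Definition in_conv (S : {set 'I_n}) (x : R * R) : Prop :=
  exists w : 'I_n -> R,
    [/\ forall i, 0 <= w i,
        forall i, i \notin S -> w i = 0,
        \sum_i w i = 1 &
        x = (\sum_i w i * (p i).1, \sum_i w i * (p i).2)].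

Definition in_open (t : {set 'I_n}) (x : R * R) : Prop :=
  exists w : 'I_n -> R,
    [/\ forall i, i \in t -> 0 < w i,
        forall i, i \notin t -> w i = 0,
        \sum_i w i = 1 &
        x = (\sum_i w i * (p i).1, \sum_i w i * (p i).2)].

Definition triangle (t : {set 'I_n}) : Prop :=
  exists a b c, t = [set a; b; c] /\ orient (p a) (p b) (p c) != 0.

(* A triangulation of P: a set of triangles partitioning conv(P)
   (cover + pairwise disjoint interiors) whose vertex set is P, and
   such that no point of P lies in a triangle other than its vertices
   (so triangles meet edge-to-edge). *)
Definition is_triangulation (T : {set {set 'I_n}}) : Prop :=
  [/\ forall t, t \in T -> triangle t,
      forall x, in_conv setT x <-> exists2 t, t \in T & in_conv t x,
      forall t1 t2, t1 \in T -> t2 \in T -> t1 != t2 ->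
        ~ (exists x, in_open t1 x /\ in_open t2 x),
      forall i, (exists2 t, t \in T & i \in t) &
      forall t i, t \in T -> in_conv t (p i) -> i \in t].

Definition is_edge_of (T : {set {set 'I_n}}) (e : {set 'I_n}) : bool :=
  (#|e| == 2) && [exists t in T, e \subset t].

Definition share_tri (T : {set {set 'I_n}}) (e1 e2 : {set 'I_n}) : bool :=
  (e1 != e2) && [exists t in T, (e1 \subset t) && (e2 \subset t)].

(* The associated quadrilateral is the union
   of the triangles abc and abd sharing e = ab; it is (strictly) convex
   iff c, d are strictly on opposite sides of line ab and a, b strictly on
   opposite sides of line cd. *)
Definition flip_step (T : {set {set 'I_n}}) (e g : {set 'I_n})
    (T' : {set {set 'I_n}}) : Prop :=
  exists a b c d,
    [/\ e = [set a; b], g = [set c; d],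
        [set a; b; c] \in T /\ [set a; b; d] \in T,
        orient (p a) (p b) (p c) * orient (p a) (p b) (p d) < 0 /\
        orient (p c) (p d) (p a) * orient (p c) (p d) (p b) < 0 &
        T' = ((T :\ [set a; b; c]) :\ [set a; b; d])
               :|: [set [set a; c; d]; [set b; c; d]]].

(* A flip is recorded as the pair (epsilon f, phi f). *)
Definition flip := ({set 'I_n} * {set 'I_n})%type.

(* F is valid w.r.t. T0, with intermediate triangulations Ts 0, ..., Ts (size F)
   (flip number j, 0-based, is performed on Ts j and yields Ts j.+1). *)
Definition valid_seq (T0 : {set {set 'I_n}}) (F : seq flip)
    (Ts : nat -> {set {set 'I_n}}) : Prop :=
  [/\ Ts 0 = T0,
      forall j, (j <= size F)%N -> is_triangulation (Ts j) &
      forall j, (j < size F)%N ->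
        flip_step (Ts j) (nth (set0, set0) F j).1 (nth (set0, set0) F j).2
                  (Ts j.+1)].

Definition transforms (T0 : {set {set 'I_n}}) (F : seq flip)
    (T1 : {set {set 'I_n}}) : Prop :=
  exists Ts, valid_seq T0 F Ts /\ Ts (size F) = T1.

Definition is_solution (Tinit Tfinal : {set {set 'I_n}}) (k : nat)
    (F : seq flip) (Ts : nat -> {set {set 'I_n}}) : Prop :=
  [/\ size F = k, valid_seq Tinit F Ts, Ts k = Tfinal &
      forall F', transforms Tinit F' Tfinal -> (k <= size F')%N].

Section DAG.
Variables (F : seq flip) (Ts : nat -> {set {set 'I_n}}).

Definition eps (i : 'I_(size F)) : {set 'I_n} := (nth (set0, set0) F i).1.
Definition phi (i : 'I_(size F)) : {set 'I_n} := (nth (set0, set0) F i).2.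

Definition adj : rel 'I_(size F) := fun i j =>
  [&& (i < j)%N,
      (phi i == eps j) || share_tri (Ts j) (phi i) (eps j) &
      [forall q : 'I_(size F), ((i < q)%N && (q < j)%N) ==> (eps q != phi i)]].

Definition wadj : rel 'I_(size F) := fun i j => adj i j || adj j i.

Definition is_component (C : {set 'I_(size F)}) : Prop :=
  exists x, C = [set y | connect wadj x y].

Definition changed_edge (Tinit Tfinal : {set {set 'I_n}}) (e : {set 'I_n}) :=
  is_edge_of Tinit e && ~~ is_edge_of Tfinal e.

Definition essential (Tinit Tfinal : {set {set 'I_n}})
    (C : {set 'I_(size F)}) : Prop :=
  exists2 j, j \in C & changed_edge Tinit Tfinal (eps j).

Definition consecutive (C : {set 'I_(size F)}) : Prop :=
  forall a b c : 'I_(size F), (a <= b)%N -> (b <= c)%N -> a \in C -> c \in C -> b \in C.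

Definition normalized (Tinit Tfinal : {set {set 'I_n}}) (k : nat) : Prop :=
  is_solution Tinit Tfinal k F Ts /\
  forall C, is_component C -> essential Tinit Tfinal C /\ consecutive C.

Definition dpath_in (C : {set 'I_(size F)}) (i j : 'I_(size F)) : Prop :=
  exists s, [/\ path adj i s, last i s = j & all (fun x => x \in C) (i :: s)].

End DAG.
End FlipDefs.

(* Main.v *)
Require Import Defs.
From mathcomp Require Import all_boot all_order all_algebra ring lra.
Set Implicit Arguments. Unset Strict Implicit. Unset Printing Implicit Defensive.
Import Order.TTheory GRing.Theory Num.Theory.
Local Open Scope ring_scope.

Section Alg.
Variable R : realFieldType.
Implicit Types (P Q A B C Y Z X u v c d : R * R) (l s t m : R).

Definition cmb l P Q : R * R := ((1-l)*P.1 + l*Q.1, (1-l)*P.2 + l*Q.2).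
Definition crs P Q : R := P.1*Q.2 - P.2*Q.1.
Definition vsub P Q : R * R := (P.1 - Q.1, P.2 - Q.2).
Definition tr Y (dd : R) P : R * R := (Y.1 + dd * P.1, Y.2 + dd * P.2).

Lemma oA P Q l Y Z : orient P Q (cmb l Y Z) = (1-l) * orient P Q Y + l * orient P Q Z.
Proof. rewrite /orient /cmb /=; ring. Qed.
Lemma oT P Q Y (dd : R) (V : R * R) : orient P Q (tr Y dd V) = orient P Q Y + dd * crs (vsub Q P) V.
Proof. rewrite /orient /tr /crs /vsub /=; ring. Qed.
Lemma ocyc A B C : orient B C A = orient A B C.
Proof. rewrite /orient; ring. Qed.
Lemma oswap A B C : orient B A C = - orient A B C.
Proof. rewrite /orient; ring. Qed.
Lemma oswap2 A B C : orient A C B = - orient A B C.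
Proof. rewrite /orient; ring. Qed.
Lemma o_aab A B : orient A A B = 0. Proof. rewrite /orient; ring. Qed.
Lemma o_aba A B : orient A B A = 0. Proof. rewrite /orient; ring. Qed.
Lemma o_abb A B : orient A B B = 0. Proof. rewrite /orient; ring. Qed.
Lemma ofour A B C D : orient B C D - orient A C D + orient A B D - orient A B C = 0.
Proof. rewrite /orient; ring. Qed.
Lemma bary1 A B C Y : Y.1 * orient A B C =
  orient B C Y * A.1 + orient C A Y * B.1 + orient A B Y * C.1.
Proof. rewrite /orient; ring. Qed.
Lemma bary2 A B C Y : Y.2 * orient A B C =
  orient B C Y * A.2 + orient C A Y * B.2 + orient A B Y * C.2.
Proof. rewrite /orient; ring. Qed.
Lemma barys A B C Y : orient B C Y + orient C A Y + orient A B Y = orient A B C.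
Proof. rewrite /orient; ring. Qed.
Lemma cmb_o A B : cmb 0 A B = A.
Proof. rewrite /cmb; case: A => ??/=; congr pair; ring. Qed.
Lemma cmb_1 A B : cmb 1 A B = B.
Proof. rewrite /cmb; case: B => ??/=; congr pair; ring. Qed.

Lemma par_lem (d w1 w2 : R * R) : d != (0,0) -> crs d w1 = 0 -> crs d w2 = 0 -> crs w1 w2 = 0.
Proof.
case: d => d1 d2; case: w1 => x1 y1; case: w2 => x2 y2 /=.
rewrite /crs /= => hd h1 h2.
have e1 : d1 * (x1*y2 - y1*x2) = 0.
  have -> : d1 * (x1*y2 - y1*x2) = x1 * (d1*y2 - d2*x2) - x2 * (d1*y1 - d2*x1) by ring.
  by rewrite h1 h2; ring.
have e2 : d2 * (x1*y2 - y1*x2) = 0.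
  have -> : d2 * (x1*y2 - y1*x2) = y1 * (d1*y2 - d2*x2) - y2 * (d1*y1 - d2*x1) by ring.
  by rewrite h1 h2; ring.
case: (eqVneq d1 0) => [z1|nz1]; last by move/eqP: e1; rewrite mulf_eq0 (negPf nz1) => /eqP.
case: (eqVneq d2 0) => [z2|nz2]; last by move/eqP: e2; rewrite mulf_eq0 (negPf nz2) => /eqP.
by move: hd; rewrite z1 z2 eqxx.
Qed.

Lemma collin A B P Q : A != B -> orient A B P = 0 -> orient A B Q = 0 -> orient P Q A = 0.
Proof.
move=> hAB hP hQ.
have hd : vsub B A != (0,0).
  apply: contra hAB; case: A B {hP hQ} => a1 a2 [b1 b2]; rewrite /vsub /= xpair_eqE => /andP[/eqP h1 /eqP h2].
  by apply/eqP; congr pair; [move: h1|move: h2]; move/eqP; rewrite subr_eq0 => /eqP ->.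
have h1 : crs (vsub B A) (vsub Q P) = 0.
  by transitivity (orient A B Q - orient A B P); [rewrite /orient/crs/vsub/=; ring|rewrite hP hQ subr0].
have h2 : crs (vsub B A) (vsub A P) = 0.
  by transitivity (- orient A B P); [rewrite /orient/crs/vsub/=; ring|rewrite hP oppr0].
rewrite -(par_lem hd h1 h2) /orient/crs/vsub/=; ring.
Qed.

Lemma ratio01 (a b : R) : a * b < 0 -> 0 < a / (a - b) < 1.
Proof.
move=> h.
have [[ha hb]|[ha hb]] : (0 < a /\ b < 0) \/ (a < 0 /\ 0 < b).
  case: (ltrgtP a 0) => ha; last by move: h; rewrite ha mul0r ltxx.
  + right; split=>//; case: (ltrgtP b 0) => hb //.
    * by move: h; rewrite ltNge mulr_le0 // ltW.
    * by move: h; rewrite hb mulr0 ltxx.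
  + left; split=>//; case: (ltrgtP b 0) => hb //.
    * by move: h; rewrite ltNge mulr_ge0 // ltW.
    * by move: h; rewrite hb mulr0 ltxx.
- have hd : 0 < a - b by lra.
  by rewrite divr_gt0 //= ltr_pdivrMr // mul1r; lra.
- have hd : a - b < 0 by lra.
  by rewrite ltr_ndivlMr // mul0r ltr_ndivrMr // mul1r; lra.
Qed.

Definition aval s (x : R * R) := (1-s)*x.1 + s*x.2.
Definition sx (x : R * R) := x.1 / (x.1 - x.2).

Lemma aff_nonneg (A B s s' : R) : 0 < A -> 0 <= s -> s <= s' ->
  0 <= (1-s')*A + s'*B -> 0 <= (1-s)*A + s*B.
Proof.
move=> hA hs hss h.
case: (ltrgtP s' 0) => hs'; first lra.
- have e : s' * ((1-s)*A + s*B) = (s'-s)*A + s*((1-s')*A + s'*B) by ring.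
  have : 0 <= s' * ((1-s)*A + s*B).
    rewrite e; apply: addr_ge0; apply: mulr_ge0; lra.
  by rewrite pmulr_rge0.
- have -> : s = 0 by lra.
  lra.
Qed.

Lemma sx_prop (x : R * R) : 0 < x.1 -> x.2 < 0 -> 0 < sx x < 1 /\ aval (sx x) x = 0.
Proof.
case: x => A B /= hA hB; split.
  by apply: ratio01; rewrite pmulr_rlt0.
rewrite /aval /sx /=; field; lra.
Qed.

Lemma val_pos s (x : R * R) : 0 < x.1 -> 0 <= x.2 -> 0 <= s <= 1 -> 0 <= aval s x.
Proof. case: x => A B /= hA hB hs; rewrite /aval /=; apply: addr_ge0; apply: mulr_ge0; lra. Qed.

Lemma val_le s (x : R * R) : 0 < x.1 -> x.2 < 0 -> 0 <= s -> s <= sx x -> 0 <= aval s x.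
Proof.
move=> h1 h2 hs hle; have [_ h0] := sx_prop h1 h2.
by apply: (aff_nonneg h1 hs hle); move: h0; rewrite /aval => ->.
Qed.

Lemma exit_seq (l : seq (R * R)) : all (fun x => 0 < x.1) l -> has (fun x => x.2 < 0) l ->
  exists s, [/\ 0 < s < 1, has (fun x => aval s x == 0) l & all (fun x => 0 <= aval s x) l].
Proof.
elim: l => [//|x l IH] /= /andP[hx hl] hh.
case hn: (has (fun x => x.2 < 0) l).
- have [s [hs hz ha]] := IH hl hn.
  case: (ltP (x.2) 0) => hx2; last first.
    exists s; split=> //; first by rewrite hz orbT.
    by rewrite ha andbT; apply: val_pos => //; lra.
  case: (leP s (sx x)) => hsx.
    exists s; split=> //; first by rewrite hz orbT.
    by rewrite ha andbT; apply: val_le => //; lra.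
  have [hs' h0] := sx_prop hx hx2.
  exists (sx x); split=> //; first by rewrite h0 eqxx.
  rewrite h0 lexx /=; apply/allP => y hy.
  move/allP: ha => /(_ y hy) hv; move/allP: hl => /(_ y hy) hy1.
  by apply: (aff_nonneg hy1 _ (ltW hsx)) => //; lra.
- have hx2 : x.2 < 0 by move: hh; rewrite hn orbF.
  have [hs' h0] := sx_prop hx hx2.
  exists (sx x); split=> //; first by rewrite h0 eqxx.
  rewrite h0 lexx /=; apply/allP => y hy.
  move/allP: hl => /(_ y hy) hy1.
  have hy2 : 0 <= y.2 by rewrite leNgt; apply/negP => hy2; move/hasP: hn; apply; exists y.
  by apply: val_pos => //; lra.
Qed.

Lemma VL A0 A1 A2 Z : orient A0 A1 Z = 0 -> orient A1 A2 Z = 0 -> orient A0 A1 A2 != 0 -> Z = A1.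
Proof.
move=> h0 h1 hD.
have hs := barys A0 A1 A2 Z; rewrite h0 h1 add0r addr0 in hs.
have e1 := bary1 A0 A1 A2 Z; have e2 := bary2 A0 A1 A2 Z.
rewrite h0 h1 hs !mul0r add0r addr0 mulrC in e1.
rewrite h0 h1 hs !mul0r add0r addr0 mulrC in e2.
rewrite [Z]surjective_pairing [A1]surjective_pairing.
by congr (_, _); apply: (mulfI hD).
Qed.

Lemma SL A0 A1 A2 A3 Z : orient A1 A2 Z = 0 -> 0 < orient A0 A1 Z -> 0 < orient A2 A3 Z ->
  0 < orient A0 A1 A2 -> 0 < orient A1 A2 A3 -> exists2 t, 0 < t < 1 & Z = cmb t A1 A2.
Proof.
move=> h0 hl hr c1 c2.
set D := orient A1 A2 A3.
have hD : D != 0 by rewrite gt_eqF.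
have hs := barys A1 A2 A3 Z; rewrite h0 addr0 -/D in hs.
have e1 := bary1 A1 A2 A3 Z; have e2 := bary2 A1 A2 A3 Z.
rewrite h0 mul0r addr0 -/D in e1.
rewrite h0 mul0r addr0 -/D in e2.
have hs' : orient A2 A3 Z = D - orient A3 A1 Z by rewrite -hs; ring.
have eZ : Z = cmb (orient A3 A1 Z / D) A1 A2.
  rewrite {1}[Z]surjective_pairing /cmb /=; congr (_, _); apply: (mulIf hD).
    by rewrite e1 hs'; field.
  by rewrite e2 hs'; field.
exists (orient A3 A1 Z / D) => //.
have hlt : orient A3 A1 Z / D < 1.
  rewrite ltr_pdivrMr // mul1r -hs; lra.
rewrite hlt andbT.
move: hl; rewrite {1}eZ oA o_abb mulr0 add0r => hl.
by move: hl; rewrite pmulr_lgt0.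
Qed.

Definition conv4 A0 A1 A2 A3 := [/\ 0 < orient A0 A1 A2, 0 < orient A1 A2 A3,
  0 < orient A2 A3 A0 & 0 < orient A3 A0 A1].
Lemma conv4_rot A0 A1 A2 A3 : conv4 A0 A1 A2 A3 -> conv4 A1 A2 A3 A0.
Proof. by case. Qed.

Lemma side_case A0 A1 A2 A3 Z : conv4 A0 A1 A2 A3 -> orient A1 A2 Z = 0 ->
  0 <= orient A0 A1 Z -> 0 <= orient A2 A3 Z ->
  [\/ Z = A1, Z = A2 | exists2 t, 0 < t < 1 & Z = cmb t A1 A2].
Proof.
case=> c0 c1 c2 c3 hz hl hr.
case: (ltrgtP (orient A0 A1 Z) 0) hl => hl0 // _; last first.
  by constructor 1; apply: (VL hl0 hz); rewrite gt_eqF.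
case: (ltrgtP (orient A2 A3 Z) 0) hr => hr0 // _; last first.
  by constructor 2; apply: (VL hz hr0); rewrite gt_eqF.
by constructor 3; apply: (SL hz hl0 hr0).
Qed.

Definition crossP u v c d := orient u v c * orient u v d < 0 /\ orient c d u * orient c d v < 0.

Lemma SBX P Q u v X t l m : 0 < t < 1 -> 0 < l < 1 -> u != v ->
  cmb t P Q = cmb l u v -> X = cmb m u v -> orient P Q X != 0 -> crossP u v P Q.
Proof.
move=> ht hl huv eZ eX hX.
have z1 : orient P Q (cmb t P Q) = 0 by rewrite oA o_aba o_abb; ring.
have z2 : orient u v (cmb l u v) = 0 by rewrite oA o_aba o_abb; ring.
rewrite eZ oA in z1; rewrite -eZ oA in z2.
have hu : orient P Q u != 0.
  apply: contra hX => /eqP h0; rewrite h0 mulr0 add0r in z1.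
  have h1 : orient P Q v = 0 by move/eqP: z1; rewrite mulf_eq0 gt_eqF ?(andP hl).1 //= => /eqP.
  by rewrite eX oA h0 h1; apply/eqP; ring.
have hP : orient u v P != 0.
  apply/negP => /eqP h0; rewrite h0 mulr0 add0r in z2.
  have h1 : orient u v Q = 0 by move/eqP: z2; rewrite mulf_eq0 gt_eqF ?(andP ht).1 //= => /eqP.
  by rewrite (collin huv h0 h1) eqxx in hu.
split.
- have e : t * (orient u v P * orient u v Q) = - (1-t) * orient u v P ^+ 2.
    have hQ : t * orient u v Q = - ((1-t) * orient u v P) by lra.
    by rewrite mulrCA hQ expr2; ring.
  have : t * (orient u v P * orient u v Q) < 0.
    rewrite e mulNr oppr_lt0; apply: mulr_gt0; first lra.
    by rewrite lt0r sqrf_eq0 hP /= sqr_ge0.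
  by rewrite pmulr_rlt0 //; case/andP: ht.
- have e : l * (orient P Q u * orient P Q v) = - (1-l) * orient P Q u ^+ 2.
    have hQ : l * orient P Q v = - ((1-l) * orient P Q u) by lra.
    by rewrite mulrCA hQ expr2; ring.
  have : l * (orient P Q u * orient P Q v) < 0.
    rewrite e mulNr oppr_lt0; apply: mulr_gt0; first lra.
    by rewrite lt0r sqrf_eq0 hu /= sqr_ge0.
  by rewrite pmulr_rlt0 //; case/andP: hl.
Qed.

Lemma quad_exit P0 P1 P2 P3 X (U : R * R) : conv4 P0 P1 P2 P3 ->
  0 < orient P0 P1 X -> 0 < orient P1 P2 X -> 0 < orient P2 P3 X -> 0 < orient P3 P0 X ->
  [/\ 0 <= orient P0 P1 U, 0 <= orient P1 P2 U, 0 <= orient P2 P3 U & 0 <= orient P3 P0 U]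
  \/ exists2 s, 0 < s < 1 &
    ([\/ cmb s X U = P0, cmb s X U = P1, cmb s X U = P2 | cmb s X U = P3] \/
     exists2 t, 0 < t < 1 & [\/ cmb s X U = cmb t P0 P1, cmb s X U = cmb t P1 P2,
                               cmb s X U = cmb t P2 P3 | cmb s X U = cmb t P3 P0]).
Proof.
move=> hc g0 g1 g2 g3.
case: (boolP [&& 0 <= orient P0 P1 U, 0 <= orient P1 P2 U, 0 <= orient P2 P3 U & 0 <= orient P3 P0 U]).
  by case/and4P=> *; left; split.
rewrite !negb_and -!ltNge => hn; right.
have := @exit_seq [:: (orient P0 P1 X, orient P0 P1 U); (orient P1 P2 X, orient P1 P2 U);
   (orient P2 P3 X, orient P2 P3 U); (orient P3 P0 X, orient P3 P0 U)].
rewrite /= g0 g1 g2 g3 orbF /=.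
case/(_ isT hn) => s [hs hz ha]; exists s => //.
rewrite /aval /= -!oA !andbT in hz ha; rewrite orbF in hz.
case/and4P: ha => a0 a1 a2 a3.
have hc1 := conv4_rot hc; have hc2 := conv4_rot hc1; have hc3 := conv4_rot hc2.
case/or4P: hz => /eqP hz.
- case: (side_case hc3 hz a3 a1) => [->|->|[t ht ->]]; [by left; constructor 1|by left; constructor 2|].
  by right; exists t => //; constructor 1.
- case: (side_case hc hz a0 a2) => [->|->|[t ht ->]]; [by left; constructor 2|by left; constructor 3|].
  by right; exists t => //; constructor 2.
- case: (side_case hc1 hz a1 a3) => [->|->|[t ht ->]]; [by left; constructor 3|by left; constructor 4|].
  by right; exists t => //; constructor 3.
- case: (side_case hc2 hz a2 a0) => [->|->|[t ht ->]]; [by left; constructor 4|by left; constructor 1|].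
  by right; exists t => //; constructor 4.
Qed.

End Alg.

Section Alg2.
Variable R : realFieldType.
Implicit Types (P Q X : R * R) (s l : R).
Lemma cmb_cmbL s l P Q : cmb s (cmb l P Q) P = cmb ((1-s) * l) P Q.
Proof. by rewrite /cmb /=; congr (_, _); ring. Qed.
Lemma cmb_cmbR s l P Q : cmb s (cmb l P Q) Q = cmb ((1-s) * l + s) P Q.
Proof. by rewrite /cmb /=; congr (_, _); ring. Qed.
Lemma crossP_sym2 (u v c d : R * R) : crossP u v c d -> crossP u v d c.
Proof.
case=> h1 h2; split; first by rewrite mulrC.
by rewrite (oswap c d u) (oswap c d v) mulrNN.
Qed.
Lemma crossP_sym1 (u v c d : R * R) : crossP u v c d -> crossP v u c d.
Proof.
case=> h1 h2; split; last by rewrite mulrC.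
by rewrite (oswap u v c) (oswap u v d) mulrNN.
Qed.
End Alg2.

Section Small.
Variable R : realFieldType.
Definition good (P : R -> Prop) := exists2 d0 : R, 0 < d0 & forall d, 0 < d -> d <= d0 -> P d.

Lemma good1 (A B : R) : 0 < A -> good (fun d => 0 < A + d * B).
Proof.
move=> hA; have hB : 0 < `|B| + 1 by rewrite ltr_wpDl.
exists (A / (`|B| + 1)); first exact: divr_gt0.
move=> d hd; rewrite ler_pdivlMr // => hle.
have h1 : - `|B| <= B := lerNnormlW (lexx _).
have h2 : 0 <= `|B| := normr_ge0 _.
nra.
Qed.

Lemma goodI P Q : good P -> good Q -> good (fun d => P d /\ Q d).
Proof.
move=> [d0 h0 hP] [d1 h1 hQ].
case: (leP d0 d1) => h.
- exists d0 => // d hd hle; split; [exact: hP | apply: hQ => //; exact: le_trans hle h].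
- exists d1 => // d hd hle; split; [apply: hP => //; exact: le_trans hle (ltW h) | exact: hQ].
Qed.

Lemma good_ex P : good P -> exists2 d, 0 < d & P d.
Proof. by case=> d0 h0 hP; exists d0 => //; apply: hP. Qed.
End Small.

Section Tri.
Variables (R : realFieldType) (n : nat) (p : 'I_n -> R * R).
Implicit Types (a b c d u v w : 'I_n) (T : {set {set 'I_n}}).

Lemma odist a b c : orient (p a) (p b) (p c) != 0 -> [/\ a != b, b != c & a != c].
Proof.
move=> h; split; apply/negP => /eqP e; move: h; rewrite e.
- by rewrite o_aab eqxx.
- by rewrite o_abb eqxx.
- by rewrite o_aba eqxx.
Qed.

Lemma sum3 a b c (F : 'I_n -> R) : a != b -> b != c -> a != c ->
  (forall i, i \notin [set a; b; c] -> F i = 0) -> \sum_i F i = F a + F b + F c.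
Proof.
move=> hab hbc hac h.
rewrite (bigD1 a) //= (bigD1 b) //=; last by rewrite eq_sym.
rewrite (bigD1 c) //=; last by rewrite (eq_sym c a) hac eq_sym.
rewrite big1 ?addr0 ?addrA // => i /andP[/andP [hia hib] hic].
by apply: h; rewrite !inE !negb_or hia hib hic.
Qed.

Definition wts a b c (Y : R * R) (i : 'I_n) : R :=
  let D := orient (p a) (p b) (p c) in
  if i == a then orient (p b) (p c) Y / D else if i == b then orient (p c) (p a) Y / D
  else if i == c then orient (p a) (p b) Y / D else 0.

Lemma wts_prop a b c Y : orient (p a) (p b) (p c) != 0 ->
  [/\ forall i, i \notin [set a; b; c] -> wts a b c Y i = 0,
      wts a b c Y a = orient (p b) (p c) Y / orient (p a) (p b) (p c),
      wts a b c Y b = orient (p c) (p a) Y / orient (p a) (p b) (p c),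
      wts a b c Y c = orient (p a) (p b) Y / orient (p a) (p b) (p c) &
      [/\ \sum_i wts a b c Y i = 1,
          Y.1 = \sum_i wts a b c Y i * (p i).1 & Y.2 = \sum_i wts a b c Y i * (p i).2]].
Proof.
move=> hD; have [hab hbc hac] := odist hD.
have h0 : forall i, i \notin [set a; b; c] -> wts a b c Y i = 0.
  move=> i; rewrite /wts; case: ifP => [/eqP->|_]; first by rewrite !inE eqxx.
  case: ifP => [/eqP->|_]; first by rewrite !inE eqxx orbT.
  by case: ifP => [/eqP->|_]; first by rewrite !inE eqxx !orbT.
have ha : wts a b c Y a = orient (p b) (p c) Y / orient (p a) (p b) (p c) by rewrite /wts eqxx.
have hb : wts a b c Y b = orient (p c) (p a) Y / orient (p a) (p b) (p c).
  by rewrite /wts eqxx eq_sym (negPf hab).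
have hc : wts a b c Y c = orient (p a) (p b) Y / orient (p a) (p b) (p c).
  by rewrite /wts eqxx (eq_sym c a) (negPf hac) (eq_sym c b) (negPf hbc).
split=> //; split.
- rewrite (sum3 hab hbc hac h0) ha hb hc -(barys (p a) (p b) (p c) Y); field.
  by rewrite barys.
- rewrite (sum3 hab hbc hac) ?ha ?hb ?hc; last by move=> i /h0 ->; rewrite mul0r.
  apply: (mulIf hD); rewrite bary1; field.
  exact: hD.
- rewrite (sum3 hab hbc hac) ?ha ?hb ?hc; last by move=> i /h0 ->; rewrite mul0r.
  apply: (mulIf hD); rewrite bary2; field.
  exact: hD.
Qed.

Lemma in3 (i a b c : 'I_n) : i \in [set a; b; c] -> [\/ i = a, i = b | i = c].
Proof. by rewrite !inE => /orP[/orP[]|] /eqP ->; [constructor 1|constructor 2|constructor 3]. Qed.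

Lemma div_ge0' (x D : R) : D != 0 -> 0 <= x * D -> 0 <= x / D.
Proof.
move=> hD h; have -> : x / D = (x * D) / (D ^+ 2) by field.
by apply: divr_ge0 => //; apply: sqr_ge0.
Qed.
Lemma div_gt0' (x D : R) : D != 0 -> 0 < x * D -> 0 < x / D.
Proof.
move=> hD h; have -> : x / D = (x * D) / (D ^+ 2) by field.
by apply: divr_gt0 => //; rewrite lt0r sqrf_eq0 hD sqr_ge0.
Qed.

Lemma conv_tri a b c (Y : R * R) : orient (p a) (p b) (p c) != 0 ->
  0 <= orient (p a) (p b) Y * orient (p a) (p b) (p c) ->
  0 <= orient (p b) (p c) Y * orient (p a) (p b) (p c) ->
  0 <= orient (p c) (p a) Y * orient (p a) (p b) (p c) -> in_conv p [set a; b; c] Y.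
Proof.
move=> hD h1 h2 h3; have [h0 ha hb hc [hs e1 e2]] := wts_prop Y hD.
exists (wts a b c Y); split => //; last by rewrite -e1 -e2; case: (Y).
move=> i; case: (boolP (i \in [set a; b; c])) => hi; last by rewrite h0.
case: (in3 hi) => ->; [rewrite ha|rewrite hb|rewrite hc]; exact: div_ge0'.
Qed.

Lemma open_tri a b c (Y : R * R) : orient (p a) (p b) (p c) != 0 ->
  0 < orient (p a) (p b) Y * orient (p a) (p b) (p c) ->
  0 < orient (p b) (p c) Y * orient (p a) (p b) (p c) ->
  0 < orient (p c) (p a) Y * orient (p a) (p b) (p c) -> in_open p [set a; b; c] Y.
Proof.
move=> hD h1 h2 h3; have [h0 ha hb hc [hs e1 e2]] := wts_prop Y hD.
exists (wts a b c Y); split => //; last by rewrite -e1 -e2; case: (Y).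
move=> i hi.
case: (in3 hi) => ->; [rewrite ha|rewrite hb|rewrite hc]; exact: div_gt0'.
Qed.

Lemma E_closed T a b c u : is_triangulation p T -> [set a; b; c] \in T ->
  orient (p a) (p b) (p c) != 0 ->
  0 <= orient (p a) (p b) (p u) * orient (p a) (p b) (p c) ->
  0 <= orient (p b) (p c) (p u) * orient (p a) (p b) (p c) ->
  0 <= orient (p c) (p a) (p u) * orient (p a) (p b) (p c) -> u \in [set a; b; c].
Proof.
case=> _ _ _ _ hT ht hD h1 h2 h3; apply: hT ht _.
exact: conv_tri.
Qed.

Lemma set3P (a b c a' b' c' : 'I_n) :
  (forall i, (i == a) || (i == b) || (i == c) = (i == a') || (i == b') || (i == c')) ->
  [set a; b; c] = [set a'; b'; c'].
Proof. by move=> h; apply/setP => i; rewrite !inE h. Qed.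

Lemma tri_of_edge T t a b : is_triangulation p T -> t \in T -> a \in t -> b \in t -> a != b ->
  exists c, t = [set a; b; c] /\ orient (p a) (p b) (p c) != 0.
Proof.
case=> hT _ _ _ _ ht; have [a' [b' [c' [-> hD]]]] := hT t ht.
move=> ha hb hab.
have Nz := (fun x y z : R * R => oppr_eq0 (orient x y z)).
case: (in3 ha) hab => ->; case: (in3 hb) => -> hab; try by rewrite eqxx in hab.
- by exists c'.
- exists b'; split; last by rewrite oswap2 oppr_eq0.
  by apply: set3P => i; case: (i == a'); case: (i == b'); case: (i == c').
- exists c'; split; last by rewrite oswap oppr_eq0.
  by apply: set3P => i; case: (i == a'); case: (i == b'); case: (i == c').
- exists a'; split; last by rewrite ocyc.
  by apply: set3P => i; case: (i == a'); case: (i == b'); case: (i == c').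
- exists b'; split; last by rewrite -ocyc.
  by apply: set3P => i; case: (i == a'); case: (i == b'); case: (i == c').
- exists a'; split; last by rewrite oswap ocyc oppr_eq0.
  by apply: set3P => i; case: (i == a'); case: (i == b'); case: (i == c').
Qed.

Lemma overlap T a1 b1 c1 a2 b2 c2 (x V : R * R) (l1 l2 : R) :
  is_triangulation p T -> [set a1; b1; c1] \in T -> [set a2; b2; c2] \in T ->
  [set a1; b1; c1] != [set a2; b2; c2] ->
  orient (p a1) (p b1) (p c1) != 0 -> orient (p a2) (p b2) (p c2) != 0 ->
  0 < l1 < 1 -> x = cmb l1 (p a1) (p b1) -> 0 < l2 < 1 -> x = cmb l2 (p a2) (p b2) ->
  0 < crs (vsub (p b1) (p a1)) V * orient (p a1) (p b1) (p c1) ->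
  0 < crs (vsub (p b2) (p a2)) V * orient (p a2) (p b2) (p c2) -> False.
Proof.
move=> hT ht1 ht2 hne hD1 hD2 hl1 ex1 hl2 ex2 hK1 hK2.
set D1 := orient (p a1) (p b1) (p c1) in hD1 hK1.
set D2 := orient (p a2) (p b2) (p c2) in hD2 hK2.
have q1 : 0 < D1 * D1 by rewrite lt0r mulf_eq0 negb_or hD1 /= -expr2 sqr_ge0.
have q2 : 0 < D2 * D2 by rewrite lt0r mulf_eq0 negb_or hD2 /= -expr2 sqr_ge0.
case/andP: hl1 => l1a l1b; case/andP: hl2 => l2a l2b.
have s1 : 0 < (1 - l1) * (D1 * D1) by apply: mulr_gt0; lra.
have s2 : 0 < l1 * (D1 * D1) by apply: mulr_gt0.
have s3 : 0 < (1 - l2) * (D2 * D2) by apply: mulr_gt0; lra.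
have s4 : 0 < l2 * (D2 * D2) by apply: mulr_gt0.
have [d hd [[[g1 g2] g3] g4]] := good_ex (goodI (goodI (goodI
   (good1 (crs (vsub (p c1) (p b1)) V * D1) s1)
   (good1 (crs (vsub (p a1) (p c1)) V * D1) s2))
   (good1 (crs (vsub (p c2) (p b2)) V * D2) s3))
   (good1 (crs (vsub (p a2) (p c2)) V * D2) s4)).
case: hT => _ _ hdis _ _.
apply: (hdis _ _ ht1 ht2 hne); exists (tr x d V); split.
- apply: open_tri => //; rewrite !oT ex1 !oA ?o_aba ?o_abb -/D1.
  + by rewrite (_ : _ * D1 = d * (crs (vsub (p b1) (p a1)) V * D1)); [apply: mulr_gt0|ring].
  + by rewrite (ocyc (p a1) (p b1) (p c1)) -/D1; lra.
  + by rewrite (ocyc (p b1) (p c1) (p a1)) (ocyc (p a1) (p b1) (p c1)) -/D1; lra.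
- apply: open_tri => //; rewrite !oT ex2 !oA ?o_aba ?o_abb -/D2.
  + by rewrite (_ : _ * D2 = d * (crs (vsub (p b2) (p a2)) V * D2)); [apply: mulr_gt0|ring].
  + by rewrite (ocyc (p a2) (p b2) (p c2)) -/D2; lra.
  + by rewrite (ocyc (p b2) (p c2) (p a2)) (ocyc (p a2) (p b2) (p c2)) -/D2; lra.
Qed.

Lemma inter_pt (u v c d : R * R) :
  orient c d u - orient c d v != 0 ->
  cmb (orient c d u / (orient c d u - orient c d v)) u v =
  cmb (orient u v c / (orient u v c - orient u v d)) c d.
Proof.
move=> h.
have h' : orient u v c - orient u v d != 0.
  have -> : orient u v c - orient u v d = - (orient c d u - orient c d v) by rewrite /orient; ring.
  by rewrite oppr_eq0.
move: h h'; rewrite /cmb /orient; case: u => u1 u2; case: v => v1 v2; case: c => c1 c2; case: d => d1 d2 /= h h'.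
by congr (_, _); field; rewrite ?h ?h'.
Qed.

Lemma prod_neq0 (x y : R) : x * y < 0 -> x != 0 /\ y != 0.
Proof. by move=> h; split; apply/negP => /eqP e; move: h; rewrite e ?mul0r ?mulr0 ltxx. Qed.

Lemma sq_pos (x : R) : x != 0 -> 0 < x * x.
Proof. by move=> h; rewrite lt0r mulf_eq0 negb_or h /= -expr2 sqr_ge0. Qed.

Lemma nocross T t1 t2 u v c d : is_triangulation p T -> t1 \in T -> t2 \in T ->
  u \in t1 -> v \in t1 -> c \in t2 -> d \in t2 -> ~ crossP (p u) (p v) (p c) (p d).
Proof.
move=> hT ht1 ht2 hu hv hc hd [cr1 cr2].
have [nc nd] := prod_neq0 cr1; have [nu nv] := prod_neq0 cr2.
have huv : u != v.
  by apply/negP => /eqP e; move: cr2; rewrite e ltNge -expr2 sqr_ge0.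
have hcd : c != d.
  by apply/negP => /eqP e; move: cr1; rewrite e ltNge -expr2 sqr_ge0.
have [w1 [et1 hD1]] := tri_of_edge hT ht1 hu hv huv.
have [w2 [et2 hD2]] := tri_of_edge hT ht2 hc hd hcd.
have hne : t1 != t2.
  apply/negP => /eqP e; move: hc hd; rewrite -e et1.
  have ncu : c != u by apply/negP => /eqP e'; move: nc; rewrite e' o_aba eqxx.
  have ncv : c != v by apply/negP => /eqP e'; move: nc; rewrite e' o_abb eqxx.
  have ndu : d != u by apply/negP => /eqP e'; move: nd; rewrite e' o_aba eqxx.
  have ndv : d != v by apply/negP => /eqP e'; move: nd; rewrite e' o_abb eqxx.
  case/in3 => ec; rewrite ?ec ?eqxx // in ncu ncv.
  case/in3 => ed; rewrite ?ed ?eqxx // in ndu ndv.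
  by move: hcd; rewrite ec ed eqxx.
have hAB : orient (p c) (p d) (p u) - orient (p c) (p d) (p v) != 0.
  rewrite subr_eq0; apply/negP => /eqP e; move: cr2; rewrite e ltNge -expr2 sqr_ge0 //.
set K := orient (p c) (p d) (p u) - orient (p c) (p d) (p v).
set D1 := orient (p u) (p v) (p w1) in hD1.
set D2 := orient (p c) (p d) (p w2) in hD2.
set V : R * R := ((- D2 * K) * ((p v).1 - (p u).1) + (D1 * K) * ((p d).1 - (p c).1),
                  (- D2 * K) * ((p v).2 - (p u).2) + (D1 * K) * ((p d).2 - (p c).2)).
have k1 : crs (vsub (p v) (p u)) V = D1 * (K * K).
  by rewrite /V /K /crs /vsub /orient /=; ring.
have k2 : crs (vsub (p d) (p c)) V = D2 * (K * K).
  by rewrite /V /K /crs /vsub /orient /=; ring.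
have hK : K != 0 by [].
rewrite et1 et2 in hne ht1 ht2.
apply: (@overlap T u v w1 c d w2 (cmb (orient (p c) (p d) (p u) / K) (p u) (p v)) V _ _
         hT ht1 ht2 hne hD1 hD2 _ erefl _ (inter_pt hAB)).
- by apply: ratio01.
- by apply: ratio01.
- rewrite k1 (_ : D1 * (K * K) * _ = (D1 * D1) * (K * K)); last by rewrite /D1; ring.
  by apply: mulr_gt0; apply: sq_pos.
- rewrite k2 (_ : D2 * (K * K) * _ = (D2 * D2) * (K * K)); last by rewrite /D2; ring.
  by apply: mulr_gt0; apply: sq_pos.
Qed.

Lemma no_pt T t u v w (l : R) : is_triangulation p T -> t \in T -> u \in t -> v \in t -> u != v ->
  0 < l < 1 -> p w = cmb l (p u) (p v) -> False.
Proof.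
move=> hT ht hu hv huv hl ew.
have [w1 [et hD]] := tri_of_edge hT ht hu hv huv.
set D := orient (p u) (p v) (p w1) in hD.
have e1 : orient (p u) (p v) (p w) = 0 by rewrite ew oA o_aba o_abb; ring.
have e2 : orient (p v) (p w1) (p w) = (1 - l) * D.
  by rewrite ew oA o_aba (ocyc (p u) (p v) (p w1)) -/D; ring.
have e3 : orient (p w1) (p u) (p w) = l * D.
  by rewrite ew oA o_abb (ocyc (p v) (p w1) (p u)) (ocyc (p u) (p v) (p w1)) -/D; ring.
have q : 0 < D * D := sq_pos hD.
case/andP: hl => l0 l1.
have : w \in [set u; v; w1].
  rewrite et in ht; apply: (E_closed hT ht hD); rewrite -/D ?e1 ?e2 ?e3.
  - by rewrite mul0r.
  - by rewrite -mulrA; apply: mulr_ge0; lra.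
  - by rewrite -mulrA; apply: mulr_ge0; lra.
case/in3 => ew'; rewrite ew' in e1 e2 e3.
- move: e2; rewrite (ocyc (p u) (p v) (p w1)) -/D => e2.
  have : l * D = 0 by rewrite -[X in X = _]/(l * D); lra.
  by move/eqP; rewrite mulf_eq0 (negPf hD) orbF => /eqP; lra.
- move: e3; rewrite (ocyc (p v) (p w1) (p u)) (ocyc (p u) (p v) (p w1)) -/D => e3.
  have : (1 - l) * D = 0 by lra.
  by move/eqP; rewrite mulf_eq0 (negPf hD) orbF => /eqP; lra.
- by move: hD; rewrite /D e1 eqxx.
Qed.

Lemma same_side T a b c w : is_triangulation p T -> [set a; b; c] \in T -> [set a; b; w] \in T ->
  [set a; b; c] != [set a; b; w] ->
  0 < orient (p a) (p b) (p c) * orient (p a) (p b) (p w) -> False.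
Proof.
move=> hT h1 h2 hne hpos.
have [hc hw] : orient (p a) (p b) (p c) != 0 /\ orient (p a) (p b) (p w) != 0.
  by split; apply/negP => /eqP e; move: hpos; rewrite e ?mul0r ?mulr0 ltxx.
apply: (@overlap T a b c a b w (cmb (1/2) (p a) (p b)) (vsub (p c) (p a)) (1/2) (1/2)
          hT h1 h2 hne hc hw _ erefl _ erefl).
- by rewrite divr_gt0 //= ltr_pdivrMr // mul1r ltr1n.
- by rewrite divr_gt0 //= ltr_pdivrMr // mul1r ltr1n.
- have -> : crs (vsub (p b) (p a)) (vsub (p c) (p a)) = orient (p a) (p b) (p c) by rewrite /orient /crs /vsub.
  exact: sq_pos.
- have -> : crs (vsub (p b) (p a)) (vsub (p c) (p a)) = orient (p a) (p b) (p c) by rewrite /orient /crs /vsub.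
  exact: hpos.
Qed.

Definition flipT T a b c d : {set {set 'I_n}} :=
  ((T :\ [set a; b; c]) :\ [set a; b; d]) :|: [set [set a; c; d]; [set b; c; d]].

Lemma flip_gone T a b c d : is_triangulation p T -> [set a; b; c] \in T -> [set a; b; d] \in T ->
  orient (p a) (p b) (p c) * orient (p a) (p b) (p d) < 0 ->
  ~~ is_edge_of (flipT T a b c d) [set a; b].
Proof.
move=> hT h1 h2 hcd; apply/negP => /andP[_ /existsP[t /andP[ht hsub]]].
have ha : a \in t by apply: (subsetP hsub); rewrite !inE eqxx.
have hb : b \in t by apply: (subsetP hsub); rewrite !inE eqxx orbT.
have [nc nd] := prod_neq0 hcd.
have [hab hbc hac] := odist nc.
have [_ hbd had] := odist nd.
move: ht; rewrite /flipT !inE => /orP[/andP[ht1 /andP[ht2 ht]]|/orP[/eqP et|/eqP et]].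
- have [w [et hw]] := tri_of_edge hT ht ha hb hab.
  rewrite et in ht1 ht2 ht.
  have [q|q] : 0 < orient (p a) (p b) (p c) * orient (p a) (p b) (p w) \/
               0 < orient (p a) (p b) (p d) * orient (p a) (p b) (p w).
    have := sq_pos nc; have := sq_pos hw; nra.
  + by apply: (same_side hT h1 ht); rewrite 1?eq_sym.
  + by apply: (same_side hT h2 ht); rewrite 1?eq_sym.
- by move: hb; rewrite et => /in3 [e|e|e]; rewrite e eqxx in hab hbc hbd.
- by move: ha; rewrite et => /in3 [e|e|e]; rewrite e eqxx in hab hac had.
Qed.

Definition NPseg (u v : 'I_n) := forall w (l : R), 0 < l < 1 -> p w <> cmb l (p u) (p v).

Lemma endpoint T a b c d u v U (X : R * R) (lam : R) :
  is_triangulation p T -> [set a; b; c] \in T -> [set a; b; d] \in T ->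
  0 < orient (p a) (p b) (p c) -> orient (p a) (p b) (p d) < 0 ->
  conv4 (p a) (p d) (p b) (p c) ->
  0 < orient (p a) (p d) X -> 0 < orient (p d) (p b) X -> 0 < orient (p b) (p c) X ->
  0 < orient (p c) (p a) X ->
  NPseg u v -> u != v -> X = cmb lam (p u) (p v) ->
  orient (p u) (p v) (p c) != 0 -> orient (p u) (p v) (p d) != 0 ->
  orient (p u) (p v) (p U) = 0 ->
  (forall s, 0 < s < 1 -> exists2 l', 0 < l' < 1 & cmb s X (p U) = cmb l' (p u) (p v)) ->
  [\/ U = a, U = b | [\/ crossP (p u) (p v) (p a) (p d), crossP (p u) (p v) (p d) (p b),
                         crossP (p u) (p v) (p b) (p c) | crossP (p u) (p v) (p c) (p a)]].
Proof.
move=> hT h1 h2 hc hd hq g0 g1 g2 g3 hNP huv eX nc nd hU hZ.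
case: (quad_exit (p U) hq g0 g1 g2 g3).
- case=> a0 a1 a2 a3.
  case: (leP 0 (orient (p a) (p b) (p U))) => hab.
  + have : U \in [set a; b; c].
      apply: (E_closed hT h1); rewrite ?gt_eqF //.
      * by apply: mulr_ge0 => //; apply: ltW.
      * by apply: mulr_ge0 => //; apply: ltW.
      * by apply: mulr_ge0 => //; apply: ltW.
    case/in3 => e; [by constructor 1|by constructor 2|].
    by move: nc; rewrite -e hU eqxx.
  + have : U \in [set a; b; d].
      apply: (E_closed hT h2); rewrite ?lt_eqF //.
      * by apply: ltW; rewrite nmulr_rgt0.
      * rewrite (_ : orient (p b) (p d) (p U) = - orient (p d) (p b) (p U)); last by rewrite /orient; ring.
        by rewrite mulNr -mulrN; apply: mulr_ge0 => //; rewrite oppr_ge0 ltW.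
      * rewrite (_ : orient (p d) (p a) (p U) = - orient (p a) (p d) (p U)); last by rewrite /orient; ring.
        by rewrite mulNr -mulrN; apply: mulr_ge0 => //; rewrite oppr_ge0 ltW.
    case/in3 => e; [by constructor 1|by constructor 2|].
    by move: nd; rewrite -e hU eqxx.
- case=> s hs [hv|[t ht hside]].
  + have [l' hl' eZ] := hZ s hs.
    case: hv => ev; rewrite ev in eZ.
    * by case: (hNP a l' hl').
    * by move: nd; rewrite eZ oA o_aba o_abb !mulr0 addr0 eqxx.
    * by case: (hNP b l' hl').
    * by move: nc; rewrite eZ oA o_aba o_abb !mulr0 addr0 eqxx.
  + have [l' hl' eZ] := hZ s hs.
    have hpuv : p u != p v by apply/negP => /eqP e; move: nc; rewrite e o_aab eqxx.
    constructor 3.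
    case: hside => es; rewrite es in eZ.
    * by constructor 1; apply: (SBX ht hl' hpuv eZ eX); rewrite gt_eqF.
    * by constructor 2; apply: (SBX ht hl' hpuv eZ eX); rewrite gt_eqF.
    * by constructor 3; apply: (SBX ht hl' hpuv eZ eX); rewrite gt_eqF.
    * by constructor 4; apply: (SBX ht hl' hpuv eZ eX); rewrite gt_eqF.
Qed.

Definition sides (u v a b c d : R * R) :=
  [\/ crossP u v a d, crossP u v d b, crossP u v b c | crossP u v c a].

Lemma quad_cross_pos T a b c d u v :
  is_triangulation p T -> [set a; b; c] \in T -> [set a; b; d] \in T ->
  0 < orient (p a) (p b) (p c) -> orient (p a) (p b) (p d) < 0 ->
  orient (p c) (p d) (p a) * orient (p c) (p d) (p b) < 0 ->
  NPseg u v -> u != v -> crossP (p u) (p v) (p c) (p d) ->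
  [set u; v] = [set a; b] \/ sides (p u) (p v) (p a) (p b) (p c) (p d).
Proof.
move=> hT h1 h2 hc hd hcd hNP huv [cr1 cr2].
have [nc nd] := prod_neq0 cr1.
have e4 := ofour (p a) (p b) (p c) (p d).
have ea : orient (p c) (p d) (p a) = orient (p a) (p c) (p d) by rewrite /orient; ring.
have eb : orient (p c) (p d) (p b) = orient (p b) (p c) (p d) by rewrite /orient; ring.
rewrite ea eb in hcd.
have [hacd hbcd] : orient (p a) (p c) (p d) < 0 /\ 0 < orient (p b) (p c) (p d) by nra.
have hq : conv4 (p a) (p d) (p b) (p c).
  split.
  - by rewrite (_ : orient _ _ _ = - orient (p a) (p b) (p d)) ?oppr_gt0 //; rewrite /orient; ring.
  - by rewrite (_ : orient _ _ _ = orient (p b) (p c) (p d)) //; rewrite /orient; ring.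
  - by rewrite (_ : orient _ _ _ = orient (p a) (p b) (p c)) //; rewrite /orient; ring.
  - by rewrite (_ : orient _ _ _ = - orient (p a) (p c) (p d)) ?oppr_gt0 //; rewrite /orient; ring.
have hAB : orient (p c) (p d) (p u) - orient (p c) (p d) (p v) != 0.
  rewrite subr_eq0; apply/negP => /eqP e; move: cr2; rewrite e ltNge -expr2 sqr_ge0 //.
have eX := inter_pt hAB.
set lam := orient (p c) (p d) (p u) / _ in eX.
set mu := orient (p u) (p v) (p c) / _ in eX.
set X := cmb lam (p u) (p v) in eX.
have [m0 m1] : 0 < mu /\ mu < 1 by apply/andP; apply: ratio01.
have [l0 l1] : 0 < lam /\ lam < 1 by apply/andP; apply: ratio01.
have g0 : 0 < orient (p a) (p d) X.
  rewrite eX oA o_abb mulr0 addr0 (_ : orient _ _ (p c) = - orient (p a) (p c) (p d)); last by rewrite /orient; ring.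
  apply: mulr_gt0; lra.
have g1 : 0 < orient (p d) (p b) X.
  rewrite eX oA o_aba mulr0 addr0 (_ : orient _ _ (p c) = orient (p b) (p c) (p d)); last by rewrite /orient; ring.
  apply: mulr_gt0; lra.
have g2 : 0 < orient (p b) (p c) X.
  by rewrite eX oA o_abb mulr0 add0r; apply: mulr_gt0.
have g3 : 0 < orient (p c) (p a) X.
  rewrite eX oA o_aba mulr0 add0r (_ : orient _ _ (p d) = - orient (p a) (p c) (p d)); last by rewrite /orient; ring.
  apply: mulr_gt0; lra.
have eX' : X = cmb lam (p u) (p v) by [].
have ndd : orient (p u) (p v) (p d) != 0 by [].
have hZu : forall s, 0 < s < 1 -> exists2 l', 0 < l' < 1 & cmb s X (p u) = cmb l' (p u) (p v).
  move=> s hs; exists ((1-s) * lam); last by rewrite /X cmb_cmbL.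
  case/andP: hs => s0 s1; apply/andP; split; nra.
have hZv : forall s, 0 < s < 1 -> exists2 l', 0 < l' < 1 & cmb s X (p v) = cmb l' (p u) (p v).
  move=> s hs; exists ((1-s) * lam + s); last by rewrite /X cmb_cmbR.
  case/andP: hs => s0 s1; apply/andP; split; nra.
have eu := endpoint hT h1 h2 hc hd hq g0 g1 g2 g3 hNP huv eX' nc ndd (o_aba _ _) hZu.
have ev := endpoint hT h1 h2 hc hd hq g0 g1 g2 g3 hNP huv eX' nc ndd (o_abb _ _) hZv.
have hab : a != b.
  by apply/negP => /eqP e; move: hc; rewrite e o_aab ltxx.
case: eu => [eu|eu|cu]; last by right.
- case: ev => [ev|ev|cv]; last by right.
  + by move: huv; rewrite eu ev eqxx.
  + by left; rewrite eu ev.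
- case: ev => [ev|ev|cv]; last by right.
  + by left; rewrite eu ev; apply/setP => i; rewrite !inE orbC.
  + by move: huv; rewrite eu ev eqxx.
Qed.

Lemma quad_cross T a b c d u v :
  is_triangulation p T -> [set a; b; c] \in T -> [set a; b; d] \in T ->
  orient (p a) (p b) (p c) * orient (p a) (p b) (p d) < 0 ->
  orient (p c) (p d) (p a) * orient (p c) (p d) (p b) < 0 ->
  NPseg u v -> u != v -> crossP (p u) (p v) (p c) (p d) ->
  [set u; v] = [set a; b] \/ sides (p u) (p v) (p a) (p b) (p c) (p d).
Proof.
move=> hT h1 h2 h12 hcd hNP huv hcr.
have [nc nd] := prod_neq0 h12.
case: (ltrgtP 0 (orient (p a) (p b) (p c))) => hc; last by move: nc; rewrite -hc eqxx.
- apply: (quad_cross_pos hT h1 h2 hc _ hcd hNP huv hcr).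
  by move: h12; rewrite pmulr_rlt0.
- have hd : 0 < orient (p a) (p b) (p d) by move: h12; rewrite nmulr_rlt0.
  have hdc : orient (p d) (p c) (p a) * orient (p d) (p c) (p b) < 0.
    by rewrite (oswap (p c) (p d) (p a)) (oswap (p c) (p d) (p b)) mulrNN.
  case: (quad_cross_pos hT h2 h1 hd hc hdc hNP huv (crossP_sym2 hcr)) => [->|]; first by left.
  case=> h; right.
  + by constructor 4; apply: crossP_sym2.
  + by constructor 3; apply: crossP_sym2.
  + by constructor 2; apply: crossP_sym2.
  + by constructor 1; apply: crossP_sym2.
Qed.

Lemma edge_sub T t x y : t \in T -> x \in t -> y \in t -> x != y -> is_edge_of T [set x; y].
Proof.
move=> ht hx hy hxy; rewrite /is_edge_of cards2 hxy /=.
apply/existsP; exists t; rewrite ht /=; apply/subsetP => z; rewrite !inE => /orP[]/eqP ->//.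
Qed.

Lemma set2_eq (x y c d : 'I_n) : c != d -> [set x; y] = [set c; d] ->
  (x = c /\ y = d) \/ (x = d /\ y = c).
Proof.
move=> hcd e.
have hx : x \in [set c; d] by rewrite -e !inE eqxx.
have hy : y \in [set c; d] by rewrite -e !inE eqxx orbT.
have hc : c \in [set x; y] by rewrite e !inE eqxx.
have hd : d \in [set x; y] by rewrite e !inE eqxx orbT.
move: hx hy hc hd; rewrite !inE => /orP[]/eqP ex /orP[]/eqP ey; subst.
- by rewrite !orbb => _ /eqP e1; rewrite e1 eqxx in hcd.
- by left.
- by right.
- by rewrite !orbb => /eqP e1; rewrite e1 eqxx in hcd.
Qed.

Lemma tri_sub_edge (z : {set 'I_n}) w c d : z \subset [set w; c; d] -> #|z| = 2 -> c != d ->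
  [\/ z \subset [set w; c], z \subset [set w; d] | z = [set c; d]].
Proof.
move=> hs hz hcd.
case: (boolP (z \subset [set w; c])) => s1; first by constructor 1.
case: (boolP (z \subset [set w; d])) => s2; first by constructor 2.
constructor 3.
have [x1 hx1 nx1] := subsetPn s1; have [x2 hx2 nx2] := subsetPn s2.
have ex1 : x1 = d.
  move: (subsetP hs x1 hx1) nx1; rewrite !inE.
  by case/orP=> [/orP[]|] /eqP -> //; rewrite eqxx ?orbT.
have ex2 : x2 = c.
  move: (subsetP hs x2 hx2) nx2; rewrite !inE.
  by case/orP=> [/orP[]|] /eqP -> //; rewrite eqxx ?orbT.
subst; apply/esym/eqP; rewrite eqEcard hz cards2 hcd leqnn andbT.
by apply/subsetP => x; rewrite !inE => /orP[]/eqP ->.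
Qed.

Lemma edge_flip T a b c d z : is_triangulation p T -> [set a; b; c] \in T -> [set a; b; d] \in T ->
  orient (p a) (p b) (p c) * orient (p a) (p b) (p d) < 0 ->
  is_edge_of (flipT T a b c d) z -> z = [set c; d] \/ (is_edge_of T z /\ z != [set a; b]).
Proof.
move=> hT h1 h2 hcd hz.
have hg := flip_gone hT h1 h2 hcd.
have hne : z != [set a; b] by apply: contra hg => /eqP <-.
have [nc nd] := prod_neq0 hcd.
have hcd' : c != d.
  by apply/negP => /eqP e; move: hcd; rewrite e ltNge -expr2 sqr_ge0.
move: (hz) => /andP[/eqP hc2 /existsP[t /andP[ht hsub]]].
have E1 : forall w, w \in [set a; b] -> z \subset [set w; c; d] ->
    z = [set c; d] \/ (is_edge_of T z /\ z != [set a; b]).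
  move=> w hw hs.
  have hwc : [set w; c] \subset [set a; b; c].
    by apply/subsetP => x; move: hw; rewrite !inE => /orP[]/eqP-> /orP[]/eqP->; rewrite eqxx ?orbT.
  have hwd : [set w; d] \subset [set a; b; d].
    by apply/subsetP => x; move: hw; rewrite !inE => /orP[]/eqP-> /orP[]/eqP->; rewrite eqxx ?orbT.
  case: (tri_sub_edge hs hc2 hcd') => [s1|s2|->]; [right|right|by left].
  - split=> //; rewrite /is_edge_of hc2 /=; apply/existsP; exists [set a; b; c].
    by rewrite h1 (subset_trans s1 hwc).
  - split=> //; rewrite /is_edge_of hc2 /=; apply/existsP; exists [set a; b; d].
    by rewrite h2 (subset_trans s2 hwd).
move: ht; rewrite /flipT !inE => /orP[/andP[_ /andP[_ ht]]|/orP[/eqP et|/eqP et]].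
- right; split=> //; rewrite /is_edge_of hc2 /=; apply/existsP; exists t; by rewrite ht.
- by apply: (E1 a); rewrite ?inE ?eqxx // -et.
- by apply: (E1 b); rewrite ?inE ?eqxx ?orbT // -et.
Qed.

Lemma set2_neq (w1 w2 x y : 'I_n) : w2 \notin [set x; y] -> [set w1; w2] != [set x; y].
Proof. by apply: contra => /eqP <-; rewrite !inE eqxx orbT. Qed.

Lemma share_lemma T tt (w1 w2 x y : 'I_n) : tt \in T -> w1 \in tt -> w2 \in tt -> x \in tt -> y \in tt ->
  [set w1; w2] != [set x; y] -> share_tri T [set w1; w2] [set x; y].
Proof.
move=> ht h1 h2 h3 h4 hne; rewrite /share_tri hne /=; apply/existsP; exists tt.
by rewrite ht /=; apply/andP; split; apply/subsetP => z; rewrite !inE => /orP[]/eqP ->.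
Qed.
End Tri.

Theorem lemma5 (R : realFieldType) (n : nat) (p : 'I_n -> R * R)
    (Tinit Tfinal : {set {set 'I_n}}) (k : nat)
    (F : seq (flip n)) (Ts : nat -> {set {set 'I_n}})
    (C : {set 'I_(size F)}) (i h : 'I_(size F)) :
  injective p ->
  is_triangulation p Tinit -> is_triangulation p Tfinal ->
  normalized p F Ts Tinit Tfinal k ->
  is_component Ts C ->
  i \in C -> h \in C -> (i < h)%N ->
  eps i = eps h ->
  dpath_in Ts C i h.
Proof.
move=> _ _ _ [[_ [_ htri hflip] _ _] _] [x0 eC] hi hh hih heps.
have FL : forall q : 'I_(size F), flip_step p (Ts q) (eps q) (phi q) (Ts q.+1).
  by move=> q; apply: hflip.
have TRo : forall q : 'I_(size F), is_triangulation p (Ts q).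
  by move=> q; apply: htri; apply: ltnW.
case: (FL i) => u [v [c0 [d0 [ei ephi [hi1 hi2] [cv1 cv2] eTs]]]].
have [nc0 nd0] := prod_neq0 cv1.
have [huv _ _] := odist nc0.
have hNP : NPseg p u v.
  move=> w l hl hw; apply: (no_pt (TRo i) hi1 _ _ huv hl hw); by rewrite !inE eqxx ?orbT.
pose rel z := z = eps i \/ exists c d, z = [set c; d] /\ crossP (p u) (p v) (p c) (p d).
pose Inv t := forall z, is_edge_of (Ts t) z -> rel z -> exists s : 'I_(size F),
   [/\ connect (adj Ts) i s, (s < t)%N, phi s = z &
       forall q : 'I_(size F), (s < q)%N -> (q < t)%N -> eps q != z].
have hsz : (h < size F)%N := ltn_ord h.
have ADJ : forall (t : 'I_(size F)), Inv t -> forall w, is_edge_of (Ts t) w -> rel w ->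
    (w = eps t \/ share_tri (Ts t) w (eps t)) -> connect (adj Ts) i t.
  move=> t It w hw rw hsh.
  have [s [cs hst hphi hq]] := It w hw rw.
  apply: (connect_trans cs); apply: connect1.
  rewrite /adj hst /= hphi; apply/andP; split.
    by case: hsh => [->|->]; rewrite ?eqxx ?orbT.
  by apply/forallP => q; apply/implyP => /andP[q1 q2]; apply: hq.
have INV : forall t, (i < t)%N -> (t <= h)%N -> Inv t.
  elim=> [//|t IH] ht1 ht2.
  have htF : (t < size F)%N by exact: ltn_trans ht2 hsz.
  case: (eqVneq t i) => [eti|nti].
  - rewrite eti => z; rewrite eTs => hz rz.
    case: (edge_flip (TRo i) hi1 hi2 cv1 hz) => [ez|[hz' hne]].
      exists i; split => //; [by rewrite ez; exact: ephi | by move=> q q1 q2; move: q2; rewrite ltnS leqNgt q1].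
    exfalso; case: rz => [ez|[c [d [ez hcr]]]]; first by rewrite ez ei eqxx in hne.
    move/andP: hz' => [_ /existsP[t2 /andP[hT2 hs2]]].
    have hu1 : u \in [set u; v; c0] by rewrite !inE eqxx.
    have hv1 : v \in [set u; v; c0] by rewrite !inE eqxx orbT.
    have hc2 : c \in t2 by apply: (subsetP hs2); rewrite ez !inE eqxx.
    have hd2 : d \in t2 by apply: (subsetP hs2); rewrite ez !inE eqxx orbT.
    exact: (nocross (TRo i) hi1 hT2 hu1 hv1 hc2 hd2 hcr).
  have IH' : Inv t.
    apply: IH; last exact: ltnW.
    by rewrite ltn_neqAle eq_sym nti -ltnS ht1.
  set qt := Ordinal htF.
  have Itq : Inv qt := IH'.
  case: (FL qt) => a [b [c [d [ex ey [h1 h2] [k1 k2] eT]]]].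
  move=> z; rewrite eT => hz rz.
  have Tt := TRo qt.
  case: (edge_flip Tt h1 h2 k1 hz) => [ez|[hz' hne]].
  + have [nc nd] := prod_neq0 k1.
    have [hab hbc hac] := odist nc.
    have [_ hbd had] := odist nd.
    have hcd : c != d.
      by apply/negP => /eqP e; move: k1; rewrite e ltNge -expr2 sqr_ge0.
    have eab : is_edge_of (Ts qt) (eps qt) by rewrite ex; apply: (edge_sub h1); rewrite ?inE ?eqxx ?orbT.
    have Sq : connect (adj Ts) i qt.
      case: rz => [ez'|[c1 [d1 [ez' hcr]]]].
      * have euv : [set u; v] = [set c; d] by rewrite -ei -ez' ez.
        apply: (ADJ qt Itq (eps qt) eab); last by left.
        right; exists a, b; split => //.
        case: (set2_eq hcd euv) => [[-> ->]|[-> ->]]; first by split.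
        by apply: crossP_sym1; split.
      * have hcr' : crossP (p u) (p v) (p c) (p d).
          by case: (set2_eq hcd (etrans (esym ez') ez)) hcr => [[-> ->]|[-> ->]] //; apply: crossP_sym2.
        case: (quad_cross Tt h1 h2 k1 k2 hNP huv hcr') => [euv|].
          by apply: (ADJ qt Itq (eps qt) eab); [left; rewrite ex -euv ei | left].
        have nd' : d \notin [set a; b] by rewrite !inE negb_or eq_sym had eq_sym hbd.
        have nc' : c \notin [set a; b] by rewrite !inE negb_or eq_sym hac eq_sym hbc.
        case=> hs.
        - apply: (ADJ qt Itq [set a; d]); first by apply: (edge_sub h2); rewrite ?inE ?eqxx ?orbT.
            by right; exists a, d.
          by right; rewrite ex; apply: (share_lemma h2); rewrite ?inE ?eqxx ?orbT //; apply: set2_neq.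
        - apply: (ADJ qt Itq [set b; d]); first by apply: (edge_sub h2); rewrite ?inE ?eqxx ?orbT.
            by right; exists b, d; split => //; apply: crossP_sym2.
          by right; rewrite ex; apply: (share_lemma h2); rewrite ?inE ?eqxx ?orbT //; apply: set2_neq.
        - apply: (ADJ qt Itq [set b; c]); first by apply: (edge_sub h1); rewrite ?inE ?eqxx ?orbT.
            by right; exists b, c.
          by right; rewrite ex; apply: (share_lemma h1); rewrite ?inE ?eqxx ?orbT //; apply: set2_neq.
        - apply: (ADJ qt Itq [set a; c]); first by apply: (edge_sub h1); rewrite ?inE ?eqxx ?orbT.
            by right; exists a, c; split => //; apply: crossP_sym2.
          by right; rewrite ex; apply: (share_lemma h1); rewrite ?inE ?eqxx ?orbT //; apply: set2_neq.
    exists qt; split => //; first by rewrite ey ez.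
    by move=> q q1 q2; move: q2; rewrite ltnS leqNgt q1.
  + have [s [cs hst hphi hq]] := IH' z hz' rz.
    exists s; split => //; first exact: ltnW.
    move=> q q1 q2; case: (ltngtP q t) => hqt.
    * by apply: hq.
    * by move: q2; rewrite ltnS leqNgt hqt.
    * have -> : q = qt by apply: val_inj.
      by rewrite ex eq_sym.
have Ih := INV h hih (leqnn h).
case: (FL h) => a [b [c [d [ex ey [h1 h2] [k1 k2] eT]]]].
have [nc nd] := prod_neq0 k1.
have [hab _ _] := odist nc.
have hconn : connect (adj Ts) i h.
  apply: (ADJ h Ih (eps h)); last by left.
  - by rewrite ex; apply: (edge_sub h1); rewrite ?inE ?eqxx ?orbT.
  - by left; rewrite heps.
move/connectP: hconn => [s hs hlast].
exists s; split; [exact: hs | exact: esym hlast | idtac].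
apply/allP => y hy.
have cy : connect (adj Ts) i y := path_connect hs hy.
have cw : connect (wadj Ts) i y.
  apply: (connect_sub _ cy) => x1 x2 hx; apply: connect1; by rewrite /wadj hx.
move: hi; rewrite eC !inE => hi.
exact: connect_trans hi cw.
Qed.
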